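(* Let $(H,K,I)$ be a split graph on $7$ distinct vertices with $I=\{a,b,u,v\}$ and $K=\{x,y,z\}$. Suppose the induced subgraphs $\langle a,x,y,u\rangle_H$ and $\langle b,x,z,v\rangle_H$ are both isomorphic to $P_4$. Then: (1) $u$ and $z$ are joined by a path $P$ in $A_4(H)$ with $V(P)\setminus\{z\}\subseteq I$; (2) $\Phi(H)$ is connected.
   Context: All graphs are finite and simple. A split graph is a graph $S$ whose vertex set is a disjoint union $V(S)=K\,\dot\cup\,I$ with $K$ a clique and $I$ an independent set; $(K,I)$ is called a bipartition of $S$, and $(S,K,I)$ denotes $S$ together with this fixed bipartition. $\langle W\rangle_G$ denotes the subgraph of $G$ induced by $W$. A 2-switch in a graph $G$ is performed on four distinct vertices $a,b,c,d$ with $ab,cd\in E(G)$ and $ac,bd\notin E(G)$: it deletes $ab,cd$ and adds $ac,bd$; $a,b,c,d$ are said to participate in it. $A_4(G)$ is the graph with vertex set $V(G)$ in which distinct $u,v$ are adjacent iff some 2-switch on $G$ has both $u$ and $v$ among its participating vertices. For a split graph $(S,K,I)$ and distinct $u,v\in I$, $\sigma_{uv}(S)$ is the number of induced subgraphs of $S$ isomorphic to $P_4$ containing both $u$ and $v$. The factor graph $\Phi(S)$ is the loopless multigraph with vertex set $I$ having exactly $\sigma_{uv}(S)$ parallel edges between $u$ and $v$. Graph notions (connected, complete, clique, etc.) applied to $\Phi(S)$ refer to its underlying simple graph, in which $u\sim v$ iff $\sigma_{uv}(S)\ge1$. *)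

(* Defs.v *)
From mathcomp Require Import all_boot.
Set Implicit Arguments.
Unset Strict Implicit.
Unset Printing Implicit Defensive.

Section Graphs.
Variable T : finType.

Definition simple_graph (e : rel T) : Prop := symmetric e /\ irreflexive e.

Definition split_bipartition (e : rel T) (K I : {set T}) : Prop :=
  [/\ [disjoint K & I], K :|: I = setT,
      {in K &, forall p q, p != q -> e p q} &
      {in I &, forall p q, ~~ e p q}].

Definition P4adj (i j : 'I_4) : bool := (i.+1 == j :> nat) || (j.+1 == i :> nat).

Definition induced_P4 (e : rel T) (W : {set T}) : bool :=
  [exists f : {ffun 'I_4 -> T},
    [&& injectiveb f, [set f i | i : 'I_4] == W &
        [forall i, forall j, e (f i) (f j) == P4adj i j]]].

Definition two_switch (e : rel T) (a b c d : T) : bool :=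
  [&& uniq [:: a; b; c; d], e a b, e c d, ~~ e a c & ~~ e b d].

Definition A4adj (e : rel T) : rel T := fun p q =>
  (p != q) && [exists a, exists b, exists c, exists d,
    [&& two_switch e a b c d, p \in [:: a; b; c; d] & q \in [:: a; b; c; d]]].

Definition sigma (e : rel T) (p q : T) : nat :=
  #|[set W : {set T} | [&& induced_P4 e W, p \in W & q \in W]]|.

(* underlying simple graph of the factor graph Phi on vertex set I *)
Definition Phiadj (e : rel T) (I : {set T}) : rel T := fun p q =>
  [&& p \in I, q \in I, p != q & 0 < sigma e p q].

Definition connected_on (I : {set T}) (r : rel T) : Prop :=
  forall p q, p \in I -> q \in I ->
    exists s : seq T, [/\ path r p s, last p s = q & all (mem I) s].
End Graphs.

(* Main.v *)
Require Import Defs.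
From mathcomp Require Import all_boot.
Set Implicit Arguments. Unset Strict Implicit.

Section L.
Variable T : finType.

Lemma mem4 (w p q r s : T) : w \in [set p; q; r; s] -> [\/ w = p, w = q, w = r | w = s].
Proof. rewrite !inE -!orbA. by move=> /or4P[]/eqP; constructor. Qed.

Definition o0 : 'I_4 := @Ordinal 4 0 isT.
Definition o1 : 'I_4 := @Ordinal 4 1 isT.
Definition o2 : 'I_4 := @Ordinal 4 2 isT.
Definition o3 : 'I_4 := @Ordinal 4 3 isT.

Lemma P4_pattern (e : rel T) p k1 k2 q :
  symmetric e -> irreflexive e -> e k1 k2 -> ~~ e p q ->
  induced_P4 e [set p; k1; k2; q] ->
  (e p k1 && ~~ e p k2 && e q k2 && ~~ e q k1) ||
  (e p k2 && ~~ e p k1 && e q k1 && ~~ e q k2).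
Proof.
move=> Hs Hi Hkk Hpq /existsP[f /and3P[_ /eqP Himg /forallP Hadj]].
have Hf i : f i \in [set p; k1; k2; q] by rewrite -Himg; apply: imset_f.
have He i j : e (f i) (f j) = P4adj i j by apply/eqP; move/forallP: (Hadj i) => /(_ j).
have E01 : e (f o0) (f o1) = true := He o0 o1.
have E12 : e (f o1) (f o2) = true := He o1 o2.
have E23 : e (f o2) (f o3) = true := He o2 o3.
have E02 : e (f o0) (f o2) = false := He o0 o2.
have E13 : e (f o1) (f o3) = false := He o1 o3.
have E03 : e (f o0) (f o3) = false := He o0 o3.
move: E01 E12 E23 E02 E13 E03.
move: (mem4 (Hf o0)) (mem4 (Hf o1)) (mem4 (Hf o2)) (mem4 (Hf o3)).
move=> [->|->|->|->] [->|->|->|->] [->|->|->|->] [->|->|->|->];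
 rewrite ?Hi ?(Hs k1 p) ?(Hs k2 p) ?(Hs k1 q) ?(Hs k2 q) ?(Hs k2 k1) ?(Hs q p) ?Hkk ?(negbTE Hpq);
 case: (e p k1); case: (e p k2); case: (e q k1); case: (e q k2) => //.
Qed.

Lemma P4_induced (e : rel T) p q r s : symmetric e -> irreflexive e -> uniq [:: p; q; r; s] ->
  e p q -> e q r -> e r s -> ~~ e p r -> ~~ e q s -> ~~ e p s ->
  induced_P4 e [set p; q; r; s].
Proof.
move=> Hs Hi Hu Hpq Hqr Hrs Hpr Hqs Hps.
apply/existsP; exists [ffun i : 'I_4 => nth p [:: p; q; r; s] i].
apply/and3P; split.
- apply/injectiveP => i j; rewrite !ffunE => /eqP; rewrite nth_uniq ?(ltn_ord i) ?(ltn_ord j) //.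
  by move=> /eqP; apply: val_inj.
- apply/eqP/setP => w; apply/imsetP/idP.
  + case=> i _ ->; rewrite ffunE; case: i => -[|[|[|[|i]]]] //= ?; by rewrite !inE eqxx ?orbT.
  + move/mem4 => [->|->|->|->]; [exists o0|exists o1|exists o2|exists o3]; by rewrite ?inE ?ffunE.
- apply/forallP => i; apply/forallP => j; rewrite !ffunE.
  case: i => -[|[|[|[|i]]]] //= ?; case: j => -[|[|[|[|j]]]] //= ?;
  by rewrite /P4adj /= ?Hi ?(Hs q p) ?(Hs r q) ?(Hs s r) ?(Hs r p) ?(Hs s q) ?(Hs s p)
     ?Hpq ?Hqr ?Hrs ?(negbTE Hpr) ?(negbTE Hqs) ?(negbTE Hps).
Qed.

Lemma P4_from (e : rel T) p q k1 k2 : symmetric e -> irreflexive e -> ~~ e p q -> e k1 k2 ->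
  e p k1 -> ~~ e q k1 -> e q k2 -> ~~ e p k2 ->
  induced_P4 e [set p; k1; k2; q] /\ two_switch e p k1 k2 q.
Proof.
move=> Hs Hi Hpq Hkk Hpk1 Hqk1 Hqk2 Hpk2.
have n1 : p != k1 by apply/eqP => E; move: Hpk1; rewrite E Hi.
have n2 : p != k2 by apply/eqP => E; move: Hqk2; rewrite -E Hs (negbTE Hpq).
have n3 : p != q by apply/eqP => E; move: Hqk1; rewrite -E Hpk1.
have n4 : k1 != k2 by apply/eqP => E; move: Hpk2; rewrite -E Hpk1.
have n5 : k1 != q by apply/eqP => E; move: Hpq; rewrite -E Hpk1.
have n6 : k2 != q by apply/eqP => E; move: Hqk2; rewrite E Hi.
have Hu : uniq [:: p; k1; k2; q] by rewrite /= !inE !negb_or n1 n2 n3 n4 n5 n6.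
have Hk2q : e k2 q by rewrite Hs.
have Hk1q : ~~ e k1 q by rewrite Hs.
split; first exact: P4_induced.
by rewrite /two_switch Hu Hpk1 Hk2q Hpk2 Hk1q.
Qed.

Lemma A4_of_switch (e : rel T) a b c d p q : two_switch e a b c d ->
  p \in [:: a; b; c; d] -> q \in [:: a; b; c; d] -> p != q -> A4adj e p q.
Proof.
move=> H Hp Hq Hpq; rewrite /A4adj Hpq /=.
apply/existsP; exists a; apply/existsP; exists b; apply/existsP; exists c; apply/existsP; exists d.
by rewrite H Hp Hq.
Qed.

Lemma Phi_of_P4 (e : rel T) (I : {set T}) W p q : induced_P4 e W -> p \in W -> q \in W ->
  p \in I -> q \in I -> p != q -> Phiadj e I p q.
Proof.
move=> HW Hp Hq HpI HqI Hpq; rewrite /Phiadj HpI HqI Hpq /=.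
by apply/card_gt0P; exists W; rewrite inE HW Hp Hq.
Qed.

Lemma Phiadj_sym (e : rel T) (I : {set T}) : symmetric (Phiadj e I).
Proof.
move=> p q; rewrite /Phiadj eq_sym.
have -> : sigma e p q = sigma e q p.
  by apply: eq_card => W; rewrite !inE; case: (induced_P4 e W); case: (p \in W); case: (q \in W).
by case: (p \in I); case: (q \in I).
Qed.

Definition inc (p1 p2 p3 q1 q2 q3 : bool) :=
  ((p1 && ~~q1) || (p2 && ~~ q2) || (p3 && ~~ q3)) && ((q1 && ~~p1) || (q2 && ~~ p2) || (q3 && ~~ p3)).

Lemma core (ax ay az bx by_ bz ux uy uz vx vy vz : bool) :
  (ax && ~~ ay && uy && ~~ ux) || (ay && ~~ ax && ux && ~~ uy) ->
  (bx && ~~ bz && vz && ~~ vx) || (bz && ~~ bx && vx && ~~ vz) ->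
  [|| inc ax ay az bx by_ bz, inc ax ay az vx vy vz, inc ux uy uz bx by_ bz | inc ux uy uz vx vy vz].
Proof.
by case: ax; case: ay; case: az; case: bx; case: by_; case: bz;
   case: ux; case: uy; case: uz; case: vx; case: vy; case: vz.
Qed.

Lemma inc_P4 (e : rel T) x y z p q : symmetric e -> irreflexive e -> ~~ e p q ->
  e x y -> e x z -> e y z ->
  inc (e p x) (e p y) (e p z) (e q x) (e q y) (e q z) ->
  exists k1 k2, two_switch e p k1 k2 q /\ induced_P4 e [set p; k1; k2; q].
Proof.
move=> Hs Hi Hpq Hxy Hxz Hyz.
have Hyx : e y x by rewrite Hs. have Hzx : e z x by rewrite Hs. have Hzy : e z y by rewrite Hs.
rewrite /inc -!orbA; case/andP=> /or3P[/andP[h1 h1']|/andP[h1 h1']|/andP[h1 h1']]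
            /or3P[/andP[h2 h2']|/andP[h2 h2']|/andP[h2 h2']];
  try by rewrite h1 in h2'.
- by exists x, y; case: (P4_from Hs Hi Hpq Hxy h1 h1' h2 h2').
- by exists x, z; case: (P4_from Hs Hi Hpq Hxz h1 h1' h2 h2').
- by exists y, x; case: (P4_from Hs Hi Hpq Hyx h1 h1' h2 h2').
- by exists y, z; case: (P4_from Hs Hi Hpq Hyz h1 h1' h2 h2').
- by exists z, x; case: (P4_from Hs Hi Hpq Hzx h1 h1' h2 h2').
- by exists z, y; case: (P4_from Hs Hi Hpq Hzy h1 h1' h2 h2').
Qed.

Definition conn (I : {set T}) (r : rel T) p q :=
  exists s : seq T, [/\ path r p s, last p s = q & all (mem I) s].

Lemma conn_refl (I : {set T}) (r : rel T) p : conn I r p p.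
Proof. by exists [::]. Qed.

Lemma conn_edge (I : {set T}) (r : rel T) p q : r p q -> q \in I -> conn I r p q.
Proof. by move=> H Hq; exists [:: q]; rewrite /= H Hq. Qed.

Lemma conn_trans (I : {set T}) (r : rel T) p q w : conn I r p q -> conn I r q w -> conn I r p w.
Proof.
case=> s1 [P1 L1 A1] [s2 [P2 L2 A2]]; exists (s1 ++ s2).
by rewrite cat_path last_cat all_cat L1 P1 P2 A1 A2.
Qed.

Lemma conn_sym (I : {set T}) (r : rel T) p q : symmetric r -> p \in I -> conn I r p q -> conn I r q p.
Proof.
move=> Hs Hp [s H]; elim: s p Hp H => [|w s IH] p Hp [P L A] /=.
  by rewrite /= in L; rewrite -L; apply: conn_refl.
move: P A => /= /andP[Hpw P] /andP[Hw A].
apply: conn_trans (IH w Hw _) (conn_edge _ _) => //.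
by rewrite Hs.
Qed.
End L.

Theorem lemma2p1 (T : finType) (e : rel T) (a b u v x y z : T) :
  simple_graph e ->
  uniq [:: a; b; u; v; x; y; z] ->
  split_bipartition e [set x; y; z] [set a; b; u; v] ->
  induced_P4 e [set a; x; y; u] ->
  induced_P4 e [set b; x; z; v] ->
  (exists s : seq T,
     [/\ path (A4adj e) u s, last u s = z, uniq (u :: s) &
         all (fun w => (w == z) || (w \in [set a; b; u; v])) (u :: s)])
  /\ connected_on [set a; b; u; v] (Phiadj e [set a; b; u; v]).
Proof.
move=> [Hs Hi] Hu [_ _ HK HI] W1 W2.
have nab : a != b by apply: contraTneq Hu => ->; rewrite /= !inE ?eqxx ?orbT ?andbF.
have nba : b != a by rewrite eq_sym.
have nau : a != u by apply: contraTneq Hu => ->; rewrite /= !inE ?eqxx ?orbT ?andbF.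
have nua : u != a by rewrite eq_sym.
have nav : a != v by apply: contraTneq Hu => ->; rewrite /= !inE ?eqxx ?orbT ?andbF.
have nva : v != a by rewrite eq_sym.
have nax : a != x by apply: contraTneq Hu => ->; rewrite /= !inE ?eqxx ?orbT ?andbF.
have nxa : x != a by rewrite eq_sym.
have nay : a != y by apply: contraTneq Hu => ->; rewrite /= !inE ?eqxx ?orbT ?andbF.
have nya : y != a by rewrite eq_sym.
have naz : a != z by apply: contraTneq Hu => ->; rewrite /= !inE ?eqxx ?orbT ?andbF.
have nza : z != a by rewrite eq_sym.
have nbu : b != u by apply: contraTneq Hu => ->; rewrite /= !inE ?eqxx ?orbT ?andbF.
have nub : u != b by rewrite eq_sym.
have nbv : b != v by apply: contraTneq Hu => ->; rewrite /= !inE ?eqxx ?orbT ?andbF.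
have nvb : v != b by rewrite eq_sym.
have nbx : b != x by apply: contraTneq Hu => ->; rewrite /= !inE ?eqxx ?orbT ?andbF.
have nxb : x != b by rewrite eq_sym.
have nby : b != y by apply: contraTneq Hu => ->; rewrite /= !inE ?eqxx ?orbT ?andbF.
have nyb : y != b by rewrite eq_sym.
have nbz : b != z by apply: contraTneq Hu => ->; rewrite /= !inE ?eqxx ?orbT ?andbF.
have nzb : z != b by rewrite eq_sym.
have nuv : u != v by apply: contraTneq Hu => ->; rewrite /= !inE ?eqxx ?orbT ?andbF.
have nvu : v != u by rewrite eq_sym.
have nux : u != x by apply: contraTneq Hu => ->; rewrite /= !inE ?eqxx ?orbT ?andbF.
have nxu : x != u by rewrite eq_sym.
have nuy : u != y by apply: contraTneq Hu => ->; rewrite /= !inE ?eqxx ?orbT ?andbF.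
have nyu : y != u by rewrite eq_sym.
have nuz : u != z by apply: contraTneq Hu => ->; rewrite /= !inE ?eqxx ?orbT ?andbF.
have nzu : z != u by rewrite eq_sym.
have nvx : v != x by apply: contraTneq Hu => ->; rewrite /= !inE ?eqxx ?orbT ?andbF.
have nxv : x != v by rewrite eq_sym.
have nvy : v != y by apply: contraTneq Hu => ->; rewrite /= !inE ?eqxx ?orbT ?andbF.
have nyv : y != v by rewrite eq_sym.
have nvz : v != z by apply: contraTneq Hu => ->; rewrite /= !inE ?eqxx ?orbT ?andbF.
have nzv : z != v by rewrite eq_sym.
have nxy : x != y by apply: contraTneq Hu => ->; rewrite /= !inE ?eqxx ?orbT ?andbF.
have nyx : y != x by rewrite eq_sym.
have nxz : x != z by apply: contraTneq Hu => ->; rewrite /= !inE ?eqxx ?orbT ?andbF.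
have nzx : z != x by rewrite eq_sym.
have nyz : y != z by apply: contraTneq Hu => ->; rewrite /= !inE ?eqxx ?orbT ?andbF.
have nzy : z != y by rewrite eq_sym.

have Kx : x \in [set x; y; z] by rewrite !inE eqxx ?orbT.
have Ky : y \in [set x; y; z] by rewrite !inE eqxx ?orbT.
have Kz : z \in [set x; y; z] by rewrite !inE eqxx ?orbT.
set I := [set a; b; u; v].
have Ia : a \in I by rewrite !inE eqxx ?orbT.
have Ib : b \in I by rewrite !inE eqxx ?orbT.
have Iu : u \in I by rewrite !inE eqxx ?orbT.
have Iv : v \in I by rewrite !inE eqxx ?orbT.
have Exy : e x y := HK x y Kx Ky nxy.
have Exz : e x z := HK x z Kx Kz nxz.
have Eyz : e y z := HK y z Ky Kz nyz.
have Eyx : e y x by rewrite Hs.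
have Ezx : e z x by rewrite Hs.
have Nau : ~~ e a u := HI a u Ia Iu.
have Nbv : ~~ e b v := HI b v Ib Iv.
have P1 := P4_pattern Hs Hi Exy Nau W1.
have P2 := P4_pattern Hs Hi Exz Nbv W2.
have [Sbz Svz] : A4adj e b z /\ A4adj e v z.
  case/orP: (P2) => /andP[/andP[/andP[h1 h2] h3] h4].
  - have [_ S] := P4_from Hs Hi Nbv Exz h1 h4 h3 h2.
    by split; apply: (A4_of_switch S); rewrite ?inE ?eqxx ?orbT.
  - have [_ S] := P4_from Hs Hi Nbv Ezx h1 h4 h3 h2.
    by split; apply: (A4_of_switch S); rewrite ?inE ?eqxx ?orbT.
have Sua : A4adj e u a.
  case/orP: (P1) => /andP[/andP[/andP[h1 h2] h3] h4].
  - have [_ S] := P4_from Hs Hi Nau Exy h1 h4 h3 h2.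
    by apply: (A4_of_switch S); rewrite ?inE ?eqxx ?orbT.
  - have [_ S] := P4_from Hs Hi Nau Eyx h1 h4 h3 h2.
    by apply: (A4_of_switch S); rewrite ?inE ?eqxx ?orbT.
have Pau : Phiadj e I a u.
  by apply: (Phi_of_P4 W1); rewrite ?inE ?eqxx ?orbT.
have Pbv : Phiadj e I b v.
  by apply: (Phi_of_P4 W2); rewrite ?inE ?eqxx ?orbT.
have X p q : p \in I -> q \in I -> p != q ->
    inc (e p x) (e p y) (e p z) (e q x) (e q y) (e q z) -> A4adj e p q /\ Phiadj e I p q.
  move=> Hp Hq Hpq Hinc.
  have [k1 [k2 [S W]]] := inc_P4 Hs Hi (HI p q Hp Hq) Exy Exz Eyz Hinc.
  split; first by apply: (A4_of_switch S); rewrite ?inE ?eqxx ?orbT.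
  by apply: (Phi_of_P4 W) => //; rewrite ?inE ?eqxx ?orbT.
have C := @core (e a x) (e a y) (e a z) (e b x) (e b y) (e b z)
                (e u x) (e u y) (e u z) (e v x) (e v y) (e v z) P1 P2.
have Fin : conn I (Phiadj e I) a b -> connected_on I (Phiadj e I).
  move=> Cab.
  have Ha w : w \in I -> conn I (Phiadj e I) a w.
    move/mem4 => [->|->|->|->].
    - exact: conn_refl.
    - exact: Cab.
    - exact: conn_edge Pau Iu.
    - exact: conn_trans Cab (conn_edge Pbv Iv).
  move=> p q Hp Hq.
  exact: conn_trans (conn_sym (@Phiadj_sym _ e I) Ia (Ha p Hp)) (Ha q Hq).
have Pvb : Phiadj e I v b by rewrite Phiadj_sym.
case/or4P: C => H.
- have [A P] := X a b Ia Ib nab H.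
  split; last by apply: Fin; exact: conn_edge P Ib.
  exists [:: a; b; z]; split => //=; first by rewrite Sua A Sbz.
  + by rewrite !inE ?(negbTE nab) ?(negbTE nba) ?(negbTE nau) ?(negbTE nua) ?(negbTE nav) ?(negbTE nva) ?(negbTE nax) ?(negbTE nxa) ?(negbTE nay) ?(negbTE nya) ?(negbTE naz) ?(negbTE nza) ?(negbTE nbu) ?(negbTE nub) ?(negbTE nbv) ?(negbTE nvb) ?(negbTE nbx) ?(negbTE nxb) ?(negbTE nby) ?(negbTE nyb) ?(negbTE nbz) ?(negbTE nzb) ?(negbTE nuv) ?(negbTE nvu) ?(negbTE nux) ?(negbTE nxu) ?(negbTE nuy) ?(negbTE nyu) ?(negbTE nuz) ?(negbTE nzu) ?(negbTE nvx) ?(negbTE nxv) ?(negbTE nvy) ?(negbTE nyv) ?(negbTE nvz) ?(negbTE nzv) ?(negbTE nxy) ?(negbTE nyx) ?(negbTE nxz) ?(negbTE nzx) ?(negbTE nyz) ?(negbTE nzy).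
  + by rewrite !inE ?eqxx ?orbT.
- have [A P] := X a v Ia Iv nav H.
  split; last by apply: Fin; exact: conn_trans (conn_edge P Iv) (conn_edge Pvb Ib).
  exists [:: a; v; z]; split => //=; first by rewrite Sua A Svz.
  + by rewrite !inE ?(negbTE nab) ?(negbTE nba) ?(negbTE nau) ?(negbTE nua) ?(negbTE nav) ?(negbTE nva) ?(negbTE nax) ?(negbTE nxa) ?(negbTE nay) ?(negbTE nya) ?(negbTE naz) ?(negbTE nza) ?(negbTE nbu) ?(negbTE nub) ?(negbTE nbv) ?(negbTE nvb) ?(negbTE nbx) ?(negbTE nxb) ?(negbTE nby) ?(negbTE nyb) ?(negbTE nbz) ?(negbTE nzb) ?(negbTE nuv) ?(negbTE nvu) ?(negbTE nux) ?(negbTE nxu) ?(negbTE nuy) ?(negbTE nyu) ?(negbTE nuz) ?(negbTE nzu) ?(negbTE nvx) ?(negbTE nxv) ?(negbTE nvy) ?(negbTE nyv) ?(negbTE nvz) ?(negbTE nzv) ?(negbTE nxy) ?(negbTE nyx) ?(negbTE nxz) ?(negbTE nzx) ?(negbTE nyz) ?(negbTE nzy).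
  + by rewrite !inE ?eqxx ?orbT.
- have [A P] := X u b Iu Ib nub H.
  split; last by apply: Fin; exact: conn_trans (conn_edge Pau Iu) (conn_edge P Ib).
  exists [:: b; z]; split => //=; first by rewrite A Sbz.
  + by rewrite !inE ?(negbTE nab) ?(negbTE nba) ?(negbTE nau) ?(negbTE nua) ?(negbTE nav) ?(negbTE nva) ?(negbTE nax) ?(negbTE nxa) ?(negbTE nay) ?(negbTE nya) ?(negbTE naz) ?(negbTE nza) ?(negbTE nbu) ?(negbTE nub) ?(negbTE nbv) ?(negbTE nvb) ?(negbTE nbx) ?(negbTE nxb) ?(negbTE nby) ?(negbTE nyb) ?(negbTE nbz) ?(negbTE nzb) ?(negbTE nuv) ?(negbTE nvu) ?(negbTE nux) ?(negbTE nxu) ?(negbTE nuy) ?(negbTE nyu) ?(negbTE nuz) ?(negbTE nzu) ?(negbTE nvx) ?(negbTE nxv) ?(negbTE nvy) ?(negbTE nyv) ?(negbTE nvz) ?(negbTE nzv) ?(negbTE nxy) ?(negbTE nyx) ?(negbTE nxz) ?(negbTE nzx) ?(negbTE nyz) ?(negbTE nzy).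
  + by rewrite !inE ?eqxx ?orbT.
- have [A P] := X u v Iu Iv nuv H.
  split; last by apply: Fin; exact: conn_trans (conn_edge Pau Iu) (conn_trans (conn_edge P Iv) (conn_edge Pvb Ib)).
  exists [:: v; z]; split => //=; first by rewrite A Svz.
  + by rewrite !inE ?(negbTE nab) ?(negbTE nba) ?(negbTE nau) ?(negbTE nua) ?(negbTE nav) ?(negbTE nva) ?(negbTE nax) ?(negbTE nxa) ?(negbTE nay) ?(negbTE nya) ?(negbTE naz) ?(negbTE nza) ?(negbTE nbu) ?(negbTE nub) ?(negbTE nbv) ?(negbTE nvb) ?(negbTE nbx) ?(negbTE nxb) ?(negbTE nby) ?(negbTE nyb) ?(negbTE nbz) ?(negbTE nzb) ?(negbTE nuv) ?(negbTE nvu) ?(negbTE nux) ?(negbTE nxu) ?(negbTE nuy) ?(negbTE nyu) ?(negbTE nuz) ?(negbTE nzu) ?(negbTE nvx) ?(negbTE nxv) ?(negbTE nvy) ?(negbTE nyv) ?(negbTE nvz) ?(negbTE nzv) ?(negbTE nxy) ?(negbTE nyx) ?(negbTE nxz) ?(negbTE nzx) ?(negbTE nyz) ?(negbTE nzy).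
  + by rewrite !inE ?eqxx ?orbT.
Qed.
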